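(* Let $\mathcal{C}$ be a cartesian bicategory. Then $\mathcal{C}$ is a peircean bicategory (for some choice of Boolean algebra structures on its homsets) if and only if the functor $\mathcal{C}[-,I]:\mathsf{Map}(\mathcal{C})^{op}\to\mathsf{InfSl}$, $X\mapsto\mathcal{C}[X,I]$, $f\mapsto(c\mapsto f;c)$, is a boolean hyperdoctrine.
   Context: Composition in diagrammatic order. A cartesian bicategory is a poset-enriched symmetric monoidal category $(\mathcal{C},\otimes,I)$ with, for each $X$, a commutative comonoid $(\mathrm{copy}_X,\mathrm{disc}_X)$ and commutative monoid $(\mathrm{cocopy}_X,\mathrm{codisc}_X)$, such that every arrow $c:X\to Y$ satisfies $c;\mathrm{copy}_Y\le\mathrm{copy}_X;(c\otimes c)$, $c;\mathrm{disc}_Y\le\mathrm{disc}_X$; the comonoid is left adjoint to the monoid ($\mathrm{id}_X\le\mathrm{copy}_X;\mathrm{cocopy}_X$, $\mathrm{cocopy}_X;\mathrm{copy}_X\le\mathrm{id}$, $\mathrm{id}_X\le\mathrm{disc}_X;\mathrm{codisc}_X$, $\mathrm{codisc}_X;\mathrm{disc}_X\le\mathrm{id}_I$); they form special Frobenius bimonoids; and standard coherence conditions hold. A map is an arrow $f:X\to Y$ with $\mathrm{copy}_X;(f\otimes f)\le f;\mathrm{copy}_Y$ and $\mathrm{disc}_X\le f;\mathrm{disc}_Y$; maps form a category $\mathsf{Map}(\mathcal{C})$ with finite products. A peircean bicategory is a cartesian bicategory whose homsets carry Boolean algebra structures (whose order is the given one) such that $f;\neg c=\neg(f;c)$ for every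 map $f:X\to Y$ and arrow $c:Y\to Z$. An elementary and existential doctrine is a functor $P:\mathcal{C}^{op}\to\mathsf{InfSl}$ ($\mathcal{C}$ with finite products) with equality predicates $\delta_Y\in P(Y\times Y)$ such that $\alpha\mapsto P_{\langle\pi_1,\pi_2\rangle}(\alpha)\wedge P_{\langle\pi_2,\pi_3\rangle}(\delta_Y)$ is left adjoint to $P_{\mathrm{id}_X\times\Delta_Y}$, and with left adjoints $\exists_{\pi_X}\dashv P_{\pi_X}$ along projections satisfying Beck–Chevalley and Frobenius reciprocity. A boolean hyperdoctrine is such a doctrine in which every $P(X)$ is a Boolean algebra and every $P_f$ a Boolean algebra homomorphism. *)

(* Defs.v *)
Set Implicit Arguments.
Unset Strict Implicit.

Record BoolAlgOn (T : Type) (le : T -> T -> Prop) := {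
  ba_meet : T -> T -> T;
  ba_join : T -> T -> T;
  ba_top : T;
  ba_bot : T;
  ba_neg : T -> T;
  ba_meetC : forall a b, ba_meet a b = ba_meet b a;
  ba_joinC : forall a b, ba_join a b = ba_join b a;
  ba_meetA : forall a b c, ba_meet a (ba_meet b c) = ba_meet (ba_meet a b) c;
  ba_joinA : forall a b c, ba_join a (ba_join b c) = ba_join (ba_join a b) c;
  ba_meet_absorb : forall a b, ba_meet a (ba_join a b) = a;
  ba_join_absorb : forall a b, ba_join a (ba_meet a b) = a;
  ba_meet_distr : forall a b c,
      ba_meet a (ba_join b c) = ba_join (ba_meet a b) (ba_meet a c);
  ba_join_distr : forall a b c,
      ba_join a (ba_meet b c) = ba_meet (ba_join a b) (ba_join a c);
  ba_meet_top : forall a, ba_meet a ba_top = a;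
  ba_join_bot : forall a, ba_join a ba_bot = a;
  ba_compl_meet : forall a, ba_meet a (ba_neg a) = ba_bot;
  ba_compl_join : forall a, ba_join a (ba_neg a) = ba_top;
  ba_order : forall a b, le a b <-> ba_meet a b = a
}.

Definition ba_hom (T U : Type) (leT : T -> T -> Prop) (leU : U -> U -> Prop)
  (A : BoolAlgOn leT) (B : BoolAlgOn leU) (h : T -> U) : Prop :=
  (forall a b, h (ba_meet A a b) = ba_meet B (h a) (h b)) /\
  (forall a b, h (ba_join A a b) = ba_join B (h a) (h b)) /\
  h (ba_top A) = ba_top B /\
  h (ba_bot A) = ba_bot B /\
  (forall a, h (ba_neg A a) = ba_neg B (h a)).

(* Cartesian bicategories (composition in diagrammatic order: f ; g).  *)
Record CartBicat := {
  ob : Type;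
  hom : ob -> ob -> Type;
  le : forall X Y, hom X Y -> hom X Y -> Prop;
  idm : forall X, hom X X;
  cmp : forall X Y Z, hom X Y -> hom Y Z -> hom X Z;
  tens : ob -> ob -> ob;
  tensm : forall X Y X' Y', hom X Y -> hom X' Y' -> hom (tens X X') (tens Y Y');
  unit_ob : ob;
  asc : forall X Y Z, hom (tens (tens X Y) Z) (tens X (tens Y Z));
  asc_inv : forall X Y Z, hom (tens X (tens Y Z)) (tens (tens X Y) Z);
  lun : forall X, hom (tens unit_ob X) X;
  lun_inv : forall X, hom X (tens unit_ob X);
  run : forall X, hom (tens X unit_ob) X;
  run_inv : forall X, hom X (tens X unit_ob);
  sym : forall X Y, hom (tens X Y) (tens Y X);
  copy : forall X, hom X (tens X X);
  disc : forall X, hom X unit_ob;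
  cocopy : forall X, hom (tens X X) X;
  codisc : forall X, hom unit_ob X;

  le_refl : forall X Y (f : hom X Y), le f f;
  le_trans : forall X Y (f g h : hom X Y), le f g -> le g h -> le f h;
  le_antisym : forall X Y (f g : hom X Y), le f g -> le g f -> f = g;
  cmp_mono : forall X Y Z (f f' : hom X Y) (g g' : hom Y Z),
      le f f' -> le g g' -> le (cmp f g) (cmp f' g');
  tensm_mono : forall X Y X' Y' (f f' : hom X Y) (g g' : hom X' Y'),
      le f f' -> le g g' -> le (tensm f g) (tensm f' g');

  cmpA : forall X Y Z W (f : hom X Y) (g : hom Y Z) (h : hom Z W),
      cmp f (cmp g h) = cmp (cmp f g) h;
  cmp_idl : forall X Y (f : hom X Y), cmp (idm X) f = f;
  cmp_idr : forall X Y (f : hom X Y), cmp f (idm Y) = f;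

  tensm_id : forall X Y, tensm (idm X) (idm Y) = idm (tens X Y);
  tensm_cmp : forall X Y Z X' Y' Z' (f : hom X Y) (g : hom Y Z)
      (f' : hom X' Y') (g' : hom Y' Z'),
      tensm (cmp f g) (cmp f' g') = cmp (tensm f f') (tensm g g');

  asc_iso1 : forall X Y Z, cmp (asc X Y Z) (asc_inv X Y Z) = idm _;
  asc_iso2 : forall X Y Z, cmp (asc_inv X Y Z) (asc X Y Z) = idm _;
  lun_iso1 : forall X, cmp (lun X) (lun_inv X) = idm _;
  lun_iso2 : forall X, cmp (lun_inv X) (lun X) = idm _;
  run_iso1 : forall X, cmp (run X) (run_inv X) = idm _;
  run_iso2 : forall X, cmp (run_inv X) (run X) = idm _;
  sym_inv : forall X Y, cmp (sym X Y) (sym Y X) = idm _;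

  asc_nat : forall X Y Z X' Y' Z' (f : hom X X') (g : hom Y Y') (h : hom Z Z'),
      cmp (tensm (tensm f g) h) (asc X' Y' Z') = cmp (asc X Y Z) (tensm f (tensm g h));
  lun_nat : forall X Y (f : hom X Y),
      cmp (tensm (idm unit_ob) f) (lun Y) = cmp (lun X) f;
  run_nat : forall X Y (f : hom X Y),
      cmp (tensm f (idm unit_ob)) (run Y) = cmp (run X) f;
  sym_nat : forall X Y X' Y' (f : hom X X') (g : hom Y Y'),
      cmp (tensm f g) (sym X' Y') = cmp (sym X Y) (tensm g f);

  pentagon : forall W X Y Z,
      cmp (cmp (tensm (asc W X Y) (idm Z)) (asc W (tens X Y) Z))
          (tensm (idm W) (asc X Y Z))
      = cmp (asc (tens W X) Y Z) (asc W X (tens Y Z));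
  triangle : forall X Y,
      cmp (asc X unit_ob Y) (tensm (idm X) (lun Y)) = tensm (run X) (idm Y);
  hexagon : forall X Y Z,
      cmp (cmp (asc X Y Z) (sym X (tens Y Z))) (asc Y Z X)
      = cmp (cmp (tensm (sym X Y) (idm Z)) (asc Y X Z)) (tensm (idm Y) (sym X Z));

  copy_assoc : forall X,
      cmp (cmp (copy X) (tensm (copy X) (idm X))) (asc X X X)
      = cmp (copy X) (tensm (idm X) (copy X));
  copy_unitl : forall X, cmp (cmp (copy X) (tensm (disc X) (idm X))) (lun X) = idm X;
  copy_unitr : forall X, cmp (cmp (copy X) (tensm (idm X) (disc X))) (run X) = idm X;
  copy_comm : forall X, cmp (copy X) (sym X X) = copy X;

  cocopy_assoc : forall X,
      cmp (tensm (cocopy X) (idm X)) (cocopy X)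
      = cmp (cmp (asc X X X) (tensm (idm X) (cocopy X))) (cocopy X);
  cocopy_unitl : forall X, cmp (cmp (lun_inv X) (tensm (codisc X) (idm X))) (cocopy X) = idm X;
  cocopy_unitr : forall X, cmp (cmp (run_inv X) (tensm (idm X) (codisc X))) (cocopy X) = idm X;
  cocopy_comm : forall X, cmp (sym X X) (cocopy X) = cocopy X;

  copy_lax : forall X Y (c : hom X Y), le (cmp c (copy Y)) (cmp (copy X) (tensm c c));
  disc_lax : forall X Y (c : hom X Y), le (cmp c (disc Y)) (disc X);

  adj_copy_unit : forall X, le (idm X) (cmp (copy X) (cocopy X));
  adj_copy_counit : forall X, le (cmp (cocopy X) (copy X)) (idm (tens X X));
  adj_disc_unit : forall X, le (idm X) (cmp (disc X) (codisc X));
  adj_disc_counit : forall X, le (cmp (codisc X) (disc X)) (idm unit_ob);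

  special : forall X, cmp (copy X) (cocopy X) = idm X;
  frobenius_l : forall X,
      cmp (cocopy X) (copy X)
      = cmp (cmp (tensm (idm X) (copy X)) (asc_inv X X X)) (tensm (cocopy X) (idm X));
  frobenius_r : forall X,
      cmp (cocopy X) (copy X)
      = cmp (cmp (tensm (copy X) (idm X)) (asc X X X)) (tensm (idm X) (cocopy X));

  copy_tens : forall X Y,
      copy (tens X Y)
      = cmp (tensm (copy X) (copy Y))
          (cmp (asc X X (tens Y Y))
          (cmp (tensm (idm X) (asc_inv X Y Y))
          (cmp (tensm (idm X) (tensm (sym X Y) (idm Y)))
          (cmp (tensm (idm X) (asc Y X Y))
               (asc_inv X Y (tens X Y))))));
  disc_tens : forall X Y,
      disc (tens X Y) = cmp (tensm (disc X) (disc Y)) (lun unit_ob);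
  copy_unit : copy unit_ob = lun_inv unit_ob;
  disc_unit : disc unit_ob = idm unit_ob;
  cocopy_tens : forall X Y,
      cocopy (tens X Y)
      = cmp (asc X Y (tens X Y))
          (cmp (tensm (idm X) (asc_inv Y X Y))
          (cmp (tensm (idm X) (tensm (sym Y X) (idm Y)))
          (cmp (tensm (idm X) (asc X Y Y))
          (cmp (asc_inv X X (tens Y Y))
               (tensm (cocopy X) (cocopy Y))))));
  codisc_tens : forall X Y,
      codisc (tens X Y) = cmp (lun_inv unit_ob) (tensm (codisc X) (codisc Y));
  cocopy_unit : cocopy unit_ob = lun unit_ob;
  codisc_unit : codisc unit_ob = idm unit_ob
}.

Arguments hom : clear implicits.
Arguments le {_} {X Y} _ _.
Arguments idm {_} X.
Arguments cmp {_} {X Y Z} _ _.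
Arguments tens {_} _ _.
Arguments tensm {_} {X Y X' Y'} _ _.
Arguments unit_ob {_}.
Arguments asc {_} X Y Z.
Arguments asc_inv {_} X Y Z.
Arguments lun {_} X.
Arguments lun_inv {_} X.
Arguments run {_} X.
Arguments run_inv {_} X.
Arguments sym {_} X Y.
Arguments copy {_} X.
Arguments disc {_} X.
Arguments cocopy {_} X.
Arguments codisc {_} X.

Section Doctrines.
Variable C : CartBicat.

(* Maps: arrows that are (strict) comonoid homomorphisms. *)
Definition is_map (X Y : ob C) (f : hom C X Y) : Prop :=
  le (cmp (copy X) (tensm f f)) (cmp f (copy Y)) /\ le (disc X) (cmp f (disc Y)).

Definition peircean : Prop :=
  exists B : forall X Y : ob C, BoolAlgOn (@le C X Y),
    forall (X Y Z : ob C) (f : hom C X Y) (c : hom C Y Z),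
      is_map f -> cmp f (ba_neg (B Y Z) c) = ba_neg (B X Z) (cmp f c).

(* Finite products in Map(C): product X (x) Y, terminal object I. *)
Definition proj1 (X Y : ob C) : hom C (tens X Y) X :=
  cmp (tensm (idm X) (disc Y)) (run X).
Definition proj2 (X Y : ob C) : hom C (tens X Y) Y :=
  cmp (tensm (disc X) (idm Y)) (lun Y).

(* The functor C[-,I] : Map(C)^op -> InfSl, with P(X) = C[X,I] and
   P_f(c) = f ; c.  [infsl_functor mt tp] says that mt/tp are binary meets
   and top of the poset C[X,I] and that every P_f (f a map) preserves them. *)
Definition PI (X : ob C) := hom C X unit_ob.

Definition infsl_functor (mt : forall X, PI X -> PI X -> PI X) (tp : forall X, PI X) : Prop :=
  (forall X (a b : PI X), le (mt X a b) a /\ le (mt X a b) b /\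
     forall d : PI X, le d a -> le d b -> le d (mt X a b)) /\
  (forall X (a : PI X), le a (tp X)) /\
  (forall X Y (f : hom C X Y), is_map f ->
     (forall a b : PI Y, cmp f (mt Y a b) = mt X (cmp f a) (cmp f b)) /\
     cmp f (tp Y) = tp X).

(* Elementary: equality predicates delta_Y in P(Y x Y) such that
   alpha |-> P_<pi1,pi2>(alpha) /\ P_<pi2,pi3>(delta_Y) is left adjoint to
   P_{id_X x Delta_Y}, where X x Y x Y := (X (x) Y) (x) Y. *)
Definition elementary (mt : forall X, PI X -> PI X -> PI X) : Prop :=
  exists delta : forall Y, PI (tens Y Y),
    forall (X Y : ob C) (alpha : PI (tens X Y)) (beta : PI (tens (tens X Y) Y)),
      le (mt _ (cmp (proj1 (tens X Y) Y) alpha)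
               (cmp (tensm (proj2 X Y) (idm Y)) (delta Y))) beta
      <-> le alpha (cmp (cmp (tensm (idm X) (copy Y)) (asc_inv X Y Y)) beta).

(* Existential: left adjoints exists_pi -| P_pi along the projections
   pi : X x Y -> X, satisfying Beck-Chevalley and Frobenius reciprocity. *)
Definition existential (mt : forall X, PI X -> PI X -> PI X) : Prop :=
  exists ex : forall X Y : ob C, PI (tens X Y) -> PI X,
    (forall X Y (alpha : PI (tens X Y)) (beta : PI X),
        le (ex X Y alpha) beta <-> le alpha (cmp (proj1 X Y) beta)) /\
    (forall X X' Y (f : hom C X' X) (alpha : PI (tens X Y)),
        is_map f ->
        ex X' Y (cmp (tensm f (idm Y)) alpha) = cmp f (ex X Y alpha)) /\
    (forall X Y (alpha : PI (tens X Y)) (beta : PI X),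
        ex X Y (mt _ (cmp (proj1 X Y) beta) alpha) = mt X beta (ex X Y alpha)).

Definition boolean_fibres : Prop :=
  exists B : forall X : ob C, BoolAlgOn (@le C X unit_ob),
    forall X Y (f : hom C X Y), is_map f ->
      ba_hom (B Y) (B X) (fun c : PI Y => cmp f c).

Definition boolean_hyperdoctrine : Prop :=
  exists (mt : forall X, PI X -> PI X -> PI X) (tp : forall X, PI X),
    infsl_functor mt tp /\ elementary mt /\ existential mt /\ boolean_fibres.

End Doctrines.

(* Main.v *)
Require Import Defs.
From Stdlib Require Import Setoid.
Set Implicit Arguments.

Section BA.
Variables (T : Type) (le : T -> T -> Prop) (A : BoolAlgOn le).
Local Notation m := (ba_meet A).
Local Notation j := (ba_join A).
Local Notation n := (ba_neg A).
Local Notation top := (ba_top A).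
Local Notation bot := (ba_bot A).

Lemma ord a b : le a b <-> m a b = a.
Proof. apply (ba_order A). Qed.

Lemma meet_idem a : m a a = a.
Proof. rewrite <- (ba_join_absorb A a a) at 2. apply ba_meet_absorb. Qed.
Lemma join_idem a : j a a = a.
Proof. rewrite <- (ba_meet_absorb A a a) at 2. apply ba_join_absorb. Qed.
Lemma bl_refl a : le a a.
Proof. apply ord, meet_idem. Qed.
Lemma bl_trans a b c : le a b -> le b c -> le a c.
Proof.
  rewrite !ord. intros H1 H2. rewrite <- H1 at 1.
  rewrite <- ba_meetA, H2, H1. reflexivity.
Qed.
Lemma bl_antisym a b : le a b -> le b a -> a = b.
Proof. rewrite !ord. intros H1 H2. rewrite <- H1, ba_meetC, H2. reflexivity. Qed.
Lemma meet_lb1 a b : le (m a b) a.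
Proof. apply ord. rewrite ba_meetC, ba_meetA, meet_idem. reflexivity. Qed.
Lemma meet_lb2 a b : le (m a b) b.
Proof. apply ord. rewrite <- ba_meetA, meet_idem. reflexivity. Qed.
Lemma meet_glb a b x : le x a -> le x b -> le x (m a b).
Proof.
  rewrite !ord. intros H1 H2. rewrite ba_meetA, H1, H2. reflexivity.
Qed.
Lemma top_ub a : le a top.
Proof. apply ord, ba_meet_top. Qed.
Lemma le_join a b : le a b <-> j a b = b.
Proof.
  rewrite ord. split; intro H.
  - rewrite <- H, ba_joinC, ba_meetC, ba_join_absorb. reflexivity.
  - rewrite <- H, ba_meet_absorb. reflexivity.
Qed.
Lemma join_ub1 a b : le a (j a b).
Proof. apply ord, ba_meet_absorb. Qed.
Lemma join_ub2 a b : le b (j a b).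
Proof. rewrite ba_joinC. apply join_ub1. Qed.
Lemma join_lub a b c : le a c -> le b c -> le (j a b) c.
Proof.
  rewrite !le_join. intros H1 H2. rewrite <- ba_joinA, H2, H1. reflexivity.
Qed.
Lemma meet_mono a b a' b' : le a a' -> le b b' -> le (m a b) (m a' b').
Proof.
  intros. apply meet_glb.
  - apply bl_trans with a; [apply meet_lb1 | assumption].
  - apply bl_trans with b; [apply meet_lb2 | assumption].
Qed.
Lemma join_mono a b a' b' : le a a' -> le b b' -> le (j a b) (j a' b').
Proof.
  intros. apply join_lub.
  - apply bl_trans with a'; [assumption | apply join_ub1].
  - apply bl_trans with b'; [assumption | apply join_ub2].
Qed.
Lemma meet_bot a : m a bot = bot.
Proof. rewrite <- (ba_compl_meet A a), ba_meetA, meet_idem. reflexivity. Qed.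
Lemma join_botl a : j bot a = a.
Proof. rewrite ba_joinC. apply ba_join_bot. Qed.
Lemma join_top a : j a top = top.
Proof. apply le_join, top_ub. Qed.
Lemma compl_unique a x : m a x = bot -> j a x = top -> x = n a.
Proof.
  intros H1 H2.
  assert (E1 : x = m x (n a)).
  { rewrite <- (ba_meet_top A x) at 1. rewrite <- (ba_compl_join A a), ba_meet_distr,
      (ba_meetC A x a), H1, join_botl. reflexivity. }
  assert (E2 : n a = m (n a) x).
  { rewrite <- (ba_meet_top A (n a)) at 1. rewrite <- H2, ba_meet_distr,
      (ba_meetC A (n a) a), ba_compl_meet, join_botl. reflexivity. }
  transitivity (m x (n a)); [exact E1|]. rewrite ba_meetC. symmetry. exact E2.
Qed.
Lemma neg_neg a : n (n a) = a.
Proof.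
  symmetry. apply compl_unique.
  - rewrite ba_meetC. apply ba_compl_meet.
  - rewrite ba_joinC. apply ba_compl_join.
Qed.
Lemma neg_top : n top = bot.
Proof.
  symmetry. apply compl_unique.
  - rewrite ba_meetC. apply ba_meet_top.
  - apply ba_join_bot.
Qed.
Lemma de_morgan_meet a b : n (m a b) = j (n a) (n b).
Proof.
  symmetry. apply compl_unique.
  - rewrite ba_meet_distr.
    rewrite (ba_meetC A a b), <- (ba_meetA A b a), ba_compl_meet, meet_bot.
    rewrite (ba_meetC A b a), <- ba_meetA, ba_compl_meet, meet_bot, ba_join_bot. reflexivity.
  - rewrite ba_joinC, ba_join_distr.
    rewrite (ba_joinC A (j (n a) (n b)) a), ba_joinA, ba_compl_join, (ba_joinC A top), join_top.
    rewrite <- (ba_joinA A (n a) (n b) b), (ba_joinC A (n b) b), ba_compl_join, join_top, ba_meet_top. reflexivity.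
Qed.
Lemma join_demorgan a b : j a b = n (m (n a) (n b)).
Proof. rewrite de_morgan_meet, !neg_neg. reflexivity. Qed.

Lemma L1 b e L : le e (j (n b) L) -> le (m b e) L.
Proof.
  intro H. apply bl_trans with (m b (j (n b) L)).
  - apply meet_mono; [apply bl_refl | exact H].
  - rewrite ba_meet_distr, ba_compl_meet, join_botl. apply meet_lb2.
Qed.
Lemma L2 p a q : le (m p a) q -> le a (j (n p) q).
Proof.
  intro H. rewrite <- (ba_meet_top A a), <- (ba_compl_join A p), ba_meet_distr.
  rewrite (ba_joinC A (n p) q). apply join_mono.
  - rewrite ba_meetC. exact H.
  - apply meet_lb2.
Qed.
End BA.

Section Frob.
Variables (TA TB : Type) (leA : TA -> TA -> Prop) (leB : TB -> TB -> Prop)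
  (A : BoolAlgOn leA) (B : BoolAlgOn leB) (h : TB -> TA) (e : TA -> TB).
Hypothesis hm : forall b b', h (ba_meet B b b') = ba_meet A (h b) (h b').
Hypothesis hj : forall b b', h (ba_join B b b') = ba_join A (h b) (h b').
Hypothesis hn : forall b, h (ba_neg B b) = ba_neg A (h b).
Hypothesis adjh : forall a b, leB (e a) b <-> leA a (h b).

Lemma frob_gen b a : e (ba_meet A (h b) a) = ba_meet B b (e a).
Proof.
  apply (bl_antisym B).
  - apply (meet_glb B).
    + apply adjh, (meet_lb1 A).
    + apply adjh. apply (bl_trans A) with a; [apply (meet_lb2 A)|]. apply adjh, (bl_refl B).
  - apply (L1 B). apply adjh. rewrite hj, hn. apply (L2 A). apply adjh, (bl_refl B).
Qed.
End Frob.

Section Transport.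
Variables (T U : Type) (leT : T -> T -> Prop) (leU : U -> U -> Prop) (B : BoolAlgOn leU)
  (F : T -> U) (G : U -> T).
Hypothesis h1 : forall t, G (F t) = t.
Hypothesis h2 : forall u, F (G u) = u.
Hypothesis h3 : forall a b, leT a b <-> leU (F a) (F b).

Definition transport : BoolAlgOn leT.
Proof.
  refine (@Build_BoolAlgOn T leT (fun a b => G (ba_meet B (F a) (F b)))
            (fun a b => G (ba_join B (F a) (F b))) (G (ba_top B)) (G (ba_bot B))
            (fun a => G (ba_neg B (F a))) _ _ _ _ _ _ _ _ _ _ _ _ _);
    intros; rewrite ?h2.
  - f_equal; apply ba_meetC.
  - f_equal; apply ba_joinC.
  - f_equal; apply ba_meetA.
  - f_equal; apply ba_joinA.
  - rewrite ba_meet_absorb, h1. reflexivity.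
  - rewrite ba_join_absorb, h1. reflexivity.
  - f_equal; apply ba_meet_distr.
  - f_equal; apply ba_join_distr.
  - rewrite ba_meet_top, h1. reflexivity.
  - rewrite ba_join_bot, h1. reflexivity.
  - f_equal; apply ba_compl_meet.
  - f_equal; apply ba_compl_join.
  - rewrite h3, (ba_order B). split; intro H.
    + rewrite H, h1. reflexivity.
    + apply (f_equal F) in H. rewrite h2 in H. exact H.
Defined.
End Transport.

Section Basics.
Variable C : CartBicat.
Local Notation "f >> g" := (cmp f g) (at level 40, left associativity).
Local Notation "f ⊗ g" := (tensm f g) (at level 35).
Local Notation I := (@unit_ob C).

Lemma pre2 {W X Y Z : ob C} {a : hom C X Y} {b : hom C Y Z} {c : hom C X Z} :
  a >> b = c -> forall k : hom C W X, k >> a >> b = k >> c.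
Proof. intros H k. rewrite <- cmpA, H. reflexivity. Qed.
Lemma pre3 {W X Y Z V : ob C} {a : hom C X Y} {b : hom C Y Z} {c : hom C Z V} {d} :
  a >> b >> c = d -> forall k : hom C W X, k >> a >> b >> c = k >> d.
Proof. intros H k. rewrite <- H, !cmpA. reflexivity. Qed.
Lemma pre4 {W X Y Z V U : ob C} {a : hom C X Y} {b : hom C Y Z} {c : hom C Z V} {e : hom C V U} {d} :
  a >> b >> c >> e = d -> forall k : hom C W X, k >> a >> b >> c >> e = k >> d.
Proof. intros H k. rewrite <- H, !cmpA. reflexivity. Qed.
Lemma pre5 {W X Y Z V U T : ob C} {a : hom C X Y} {b : hom C Y Z} {c : hom C Z V} {e : hom C V U} {g : hom C U T} {d} :
  a >> b >> c >> e >> g = d -> forall k : hom C W X, k >> a >> b >> c >> e >> g = k >> d.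
Proof. intros H k. rewrite <- H, !cmpA. reflexivity. Qed.
Lemma pre6 {W X Y Z V U T S : ob C} {a : hom C X Y} {b : hom C Y Z} {c : hom C Z V} {e : hom C V U} {g : hom C U T} {h : hom C T S} {d} :
  a >> b >> c >> e >> g >> h = d -> forall k : hom C W X, k >> a >> b >> c >> e >> g >> h = k >> d.
Proof. intros H k. rewrite <- H, !cmpA. reflexivity. Qed.

Ltac rw H := first [rewrite (pre6 H) | rewrite (pre5 H) | rewrite (pre4 H) | rewrite (pre3 H) | rewrite (pre2 H) | rewrite H]; repeat rewrite cmpA.
Ltac rwb H := rw (eq_sym H).
Ltac nrm := repeat rewrite cmpA; repeat rewrite cmp_idl; repeat rewrite cmp_idr.

Lemma tcl {X Y Z W : ob C} (f : hom C X Y) (g : hom C Y Z) :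
  (f >> g) ⊗ idm W = (f ⊗ idm W) >> (g ⊗ idm W).
Proof. rewrite <- tensm_cmp, cmp_idl. reflexivity. Qed.
Lemma tcr {X Y Z W : ob C} (f : hom C X Y) (g : hom C Y Z) :
  idm W ⊗ (f >> g) = (idm W ⊗ f) >> (idm W ⊗ g).
Proof. rewrite <- tensm_cmp, cmp_idl. reflexivity. Qed.
Lemma tsplit {X Y X' Y' : ob C} (f : hom C X Y) (g : hom C X' Y') :
  f ⊗ g = (f ⊗ idm X') >> (idm Y ⊗ g).
Proof. rewrite <- tensm_cmp, cmp_idl, cmp_idr. reflexivity. Qed.
Lemma tsplit' {X Y X' Y' : ob C} (f : hom C X Y) (g : hom C X' Y') :
  f ⊗ g = (idm X ⊗ g) >> (f ⊗ idm Y').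
Proof. rewrite <- tensm_cmp, cmp_idl, cmp_idr. reflexivity. Qed.
Lemma tswap {X Y X' Y' : ob C} (f : hom C X Y) (g : hom C X' Y') :
  (f ⊗ idm X') >> (idm Y ⊗ g) = (idm X ⊗ g) >> (f ⊗ idm Y').
Proof. rewrite <- tsplit, <- tsplit'. reflexivity. Qed.

Lemma asc_inv_nat {X Y Z X' Y' Z' : ob C} (f : hom C X X') (g : hom C Y Y') (h : hom C Z Z') :
  (f ⊗ (g ⊗ h)) >> asc_inv X' Y' Z' = asc_inv X Y Z >> ((f ⊗ g) ⊗ h).
Proof.
  transitivity (asc_inv X Y Z >> asc X Y Z >> (f ⊗ (g ⊗ h)) >> asc_inv X' Y' Z').
  - rewrite asc_iso2, cmp_idl. reflexivity.
  - rw (eq_sym (asc_nat f g h)). rw (asc_iso1 X' Y' Z'). rewrite cmp_idr. reflexivity.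
Qed.

Lemma lun_faithful {X Y : ob C} (f g : hom C X Y) : idm I ⊗ f = idm I ⊗ g -> f = g.
Proof.
  intro H. rewrite <- (cmp_idl f), <- (cmp_idl g), <- (lun_iso2 X), <- !cmpA,
    <- !lun_nat, H. reflexivity.
Qed.
Lemma run_faithful {X Y : ob C} (f g : hom C X Y) : f ⊗ idm I = g ⊗ idm I -> f = g.
Proof.
  intro H. rewrite <- (cmp_idl f), <- (cmp_idl g), <- (run_iso2 X), <- !cmpA,
    <- !run_nat, H. reflexivity.
Qed.

Lemma iso_cancel_l {X Y Z : ob C} (i : hom C X Y) (j : hom C Y X) (f g : hom C Y Z) :
  j >> i = idm Y -> i >> f = i >> g -> f = g.
Proof. intros H1 H2. rewrite <- (cmp_idl f), <- (cmp_idl g), <- H1, <- !cmpA, H2. reflexivity. Qed.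
Lemma iso_cancel_r {X Y Z : ob C} (i : hom C Y Z) (j : hom C Z Y) (f g : hom C X Y) :
  i >> j = idm Y -> f >> i = g >> i -> f = g.
Proof. intros H1 H2. rewrite <- (cmp_idr f), <- (cmp_idr g), <- H1, !cmpA, H2. reflexivity. Qed.

(* Kelly's lemmas *)
Lemma K2 {Y Z : ob C} : asc I Y Z >> lun (tens Y Z) = lun Y ⊗ idm Z.
Proof.
  apply lun_faithful. rewrite tcr.
  apply (@iso_cancel_l _ _ _ ((asc I I Y ⊗ idm Z) >> asc I (tens I Y) Z)
           (asc_inv I (tens I Y) Z >> (asc_inv I I Y ⊗ idm Z))).
  - nrm. rw (eq_sym (tcl (W:=Z) (asc_inv I I Y) (asc I I Y))). rewrite asc_iso2, tensm_id, cmp_idr, asc_iso2. reflexivity.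
  - nrm. rw (pentagon I I Y Z). rw (triangle I (tens Y Z)).
    rwb (asc_nat (idm I) (lun Y) (idm Z)).
    rw (eq_sym (tcl (W:=Z) (asc I I Y) (idm I ⊗ lun Y))). rewrite triangle.
    rewrite <- (tensm_id Y Z). rwb (asc_nat (run I) (idm Y) (idm Z)). reflexivity.
Qed.

Lemma K1 {X Y : ob C} : asc X Y I >> (idm X ⊗ run Y) = run (tens X Y).
Proof.
  apply run_faithful. rewrite tcl.
  apply (@iso_cancel_r _ _ _ (asc X Y I) (asc_inv X Y I)); [apply asc_iso1|].
  rw (asc_nat (idm X) (run Y) (idm I)). rewrite <- (triangle Y I). rewrite tcr. nrm.
  rw (pentagon X Y I I). rwb (asc_nat (idm X) (idm Y) (lun I)). rewrite tensm_id.
  rw (triangle (tens X Y) I). reflexivity.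
Qed.

Lemma K3 : lun I = run I.
Proof.
  assert (H : lun (tens I I) = idm I ⊗ lun I).
  { apply (@iso_cancel_r _ _ _ (lun I) (lun_inv I)); [apply lun_iso1|].
    rewrite lun_nat. reflexivity. }
  apply run_faithful. rewrite <- (triangle I I), <- H, K2. reflexivity.
Qed.

Lemma asc_inv_run {X Y : ob C} : asc_inv X Y I >> run (tens X Y) = idm X ⊗ run Y.
Proof. rewrite <- K1. nrm. rw (asc_iso2 X Y I). rewrite cmp_idl. reflexivity. Qed.

Lemma triangle_inv {X Y : ob C} : (run_inv X ⊗ idm Y) >> asc X I Y = idm X ⊗ lun_inv Y.
Proof.
  transitivity ((run_inv X ⊗ idm Y) >> asc X I Y >> (idm X ⊗ lun Y) >> (idm X ⊗ lun_inv Y)).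
  - rewrite <- (cmpA _ (idm X ⊗ lun Y)), <- tcr, lun_iso1, tensm_id, cmp_idr. reflexivity.
  - rw (triangle X Y). rewrite <- tcl, run_iso2, tensm_id, cmp_idl. reflexivity.
Qed.

Lemma le_pre {W X Y : ob C} (k : hom C W X) (a b : hom C X Y) : le a b -> le (k >> a) (k >> b).
Proof. intro H. apply cmp_mono; [apply le_refl | exact H]. Qed.
Lemma le_post {X Y Z : ob C} (a b : hom C X Y) (m : hom C Y Z) : le a b -> le (a >> m) (b >> m).
Proof. intro H. apply cmp_mono; [exact H | apply le_refl]. Qed.
Lemma le_mid {W X Y Z : ob C} (k : hom C W X) (a b : hom C X Y) (m : hom C Y Z) :
  le a b -> le (k >> a >> m) (k >> b >> m).
Proof. intro H. apply le_post, le_pre, H. Qed.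
Lemma le_eq {X Y : ob C} (a b : hom C X Y) : a = b -> le a b.
Proof. intros ->. apply le_refl. Qed.

Definition M {X : ob C} (a b : hom C X I) : hom C X I := copy X >> (a ⊗ b) >> lun I.

Lemma le_disc {X : ob C} (a : hom C X I) : le a (disc X).
Proof. generalize (disc_lax a). rewrite disc_unit, cmp_idr. auto. Qed.

Lemma sym_II : sym I I = idm (tens I I).
Proof.
  rewrite <- (cmp_idl (sym I I)), <- (lun_iso1 I), <- cmpA, <- copy_unit, copy_comm, copy_unit, lun_iso1.
  reflexivity.
Qed.

Lemma M_comm {X : ob C} (a b : hom C X I) : M a b = M b a.
Proof.
  unfold M. rewrite <- (copy_comm X) at 1. rwb (sym_nat b a). rewrite sym_II, cmp_idr. reflexivity.
Qed.

Lemma M_le_r {X : ob C} (a b : hom C X I) : le (M a b) b.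
Proof.
  unfold M. apply le_trans with (copy X >> (disc X ⊗ b) >> lun I).
  - apply le_mid, tensm_mono; [apply le_disc | apply le_refl].
  - apply le_eq. rewrite tsplit. nrm. rw (lun_nat b). rw (copy_unitl X). apply cmp_idl.
Qed.
Lemma M_le_l {X : ob C} (a b : hom C X I) : le (M a b) a.
Proof. rewrite M_comm. apply M_le_r. Qed.
Lemma M_glb {X : ob C} (a b d : hom C X I) : le d a -> le d b -> le d (M a b).
Proof.
  intros Ha Hb. apply le_trans with (d >> copy I >> lun I).
  - apply le_eq. rewrite copy_unit, <- cmpA, lun_iso2, cmp_idr. reflexivity.
  - apply le_trans with (copy X >> (d ⊗ d) >> lun I).
    + apply le_post, copy_lax.
    + apply le_mid, tensm_mono; assumption.
Qed.

Lemma map_copy {X Y : ob C} (f : hom C X Y) : is_map f -> f >> copy Y = copy X >> (f ⊗ f).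
Proof. intros [H1 H2]. apply le_antisym; [apply copy_lax | exact H1]. Qed.
Lemma map_disc {X Y : ob C} (f : hom C X Y) : is_map f -> f >> disc Y = disc X.
Proof. intros [H1 H2]. apply le_antisym; [apply disc_lax | exact H2]. Qed.
Lemma map_M {X Y : ob C} (f : hom C X Y) (a b : hom C Y I) : is_map f -> f >> M a b = M (f >> a) (f >> b).
Proof. intro H. unfold M. nrm. rw (map_copy H). rewrite tensm_cmp. nrm. reflexivity. Qed.

Definition adj {X Y : ob C} (f : hom C X Y) (g : hom C Y X) := le (idm X) (f >> g) /\ le (g >> f) (idm Y).

Lemma adj_map {X Y : ob C} (f : hom C X Y) (g : hom C Y X) : adj f g -> is_map f.
Proof.
  intros [H1 H2]. split.
  - apply le_trans with (f >> g >> copy X >> (f ⊗ f)).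
    + rewrite <- (cmp_idl (copy X)) at 1. apply le_post, le_post, H1.
    + apply le_trans with (f >> copy Y >> (g ⊗ g) >> (f ⊗ f)).
      * apply le_post. rewrite <- !cmpA. apply le_pre, copy_lax.
      * rewrite <- cmpA, <- tensm_cmp. rewrite <- (cmp_idr (f >> copy Y)) at 2. rewrite <- tensm_id.
        apply le_pre, tensm_mono; exact H2.
  - apply le_trans with (f >> g >> disc X).
    + rewrite <- (cmp_idl (disc X)) at 1. apply le_post, H1.
    + rewrite <- cmpA. apply le_pre, disc_lax.
Qed.

Lemma adj_cmp {X Y Z : ob C} (f : hom C X Y) (g : hom C Y X) (f' : hom C Y Z) (g' : hom C Z Y) :
  adj f g -> adj f' g' -> adj (f >> f') (g' >> g).
Proof.
  intros [H1 H2] [H1' H2']. split.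
  - apply le_trans with (f >> g); [exact H1|].
    replace (f >> f' >> (g' >> g)) with (f >> (f' >> g') >> g) by (rewrite !cmpA; reflexivity).
    apply le_trans with (f >> idm Y >> g); [rewrite cmp_idr; apply le_refl|].
    apply le_mid, H1'.
  - apply le_trans with (g' >> f'); [|exact H2'].
    replace (g' >> g >> (f >> f')) with (g' >> (g >> f) >> f') by (rewrite !cmpA; reflexivity).
    apply le_trans with (g' >> idm Y >> f'); [apply le_mid, H2|].
    rewrite cmp_idr; apply le_refl.
Qed.

Lemma adj_tens {X Y X' Y' : ob C} (f : hom C X Y) (g : hom C Y X) (f' : hom C X' Y') (g' : hom C Y' X') :
  adj f g -> adj f' g' -> adj (f ⊗ f') (g ⊗ g').
Proof.
  intros [H1 H2] [H1' H2']. split.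
  - rewrite <- tensm_cmp, <- tensm_id. apply tensm_mono; assumption.
  - rewrite <- tensm_cmp, <- tensm_id. apply tensm_mono; assumption.
Qed.

Lemma adj_iso {X Y : ob C} (f : hom C X Y) (g : hom C Y X) : f >> g = idm X -> g >> f = idm Y -> adj f g.
Proof. intros H1 H2. split; apply le_eq; auto. Qed.

Lemma adj_id {X : ob C} : adj (idm X) (idm X).
Proof. apply adj_iso; apply cmp_idl. Qed.

Lemma pred_adj {X Y : ob C} (f : hom C X Y) (g : hom C Y X) (a : hom C X I) (b : hom C Y I) :
  adj f g -> (le (g >> a) b <-> le a (f >> b)).
Proof.
  intros [H1 H2]. split; intro H.
  - apply le_trans with (f >> g >> a).
    + rewrite <- (cmp_idl a) at 1. apply le_post, H1.
    + rewrite <- cmpA. apply le_pre, H.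
  - apply le_trans with (g >> f >> b).
    + rewrite <- cmpA. apply le_pre, H.
    + rewrite <- (cmp_idl b) at 2. apply le_post, H2.
Qed.

Definition exq {X Y : ob C} : hom C X (tens X Y) := run_inv X >> (idm X ⊗ codisc Y).

Lemma adj_proj1 {X Y : ob C} : adj (proj1 X Y) exq.
Proof.
  unfold proj1, exq. apply adj_cmp.
  - apply adj_tens; [apply adj_id | split; [apply adj_disc_unit | apply adj_disc_counit]].
  - apply adj_iso; [apply run_iso1 | apply run_iso2].
Qed.

Lemma adj_proj2 {X Y : ob C} : adj (proj2 X Y) (lun_inv Y >> (codisc X ⊗ idm Y)).
Proof.
  unfold proj2. apply adj_cmp.
  - apply adj_tens; [split; [apply adj_disc_unit | apply adj_disc_counit] | apply adj_id].
  - apply adj_iso; [apply lun_iso1 | apply lun_iso2].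
Qed.

Definition Dl {X Y : ob C} : hom C (tens X Y) (tens (tens X Y) Y) := (idm X ⊗ copy Y) >> asc_inv X Y Y.
Definition Rr {X Y : ob C} : hom C (tens (tens X Y) Y) (tens X Y) := asc X Y Y >> (idm X ⊗ cocopy Y).

Lemma adj_D {X Y : ob C} : adj (@Dl X Y) Rr.
Proof.
  unfold Dl, Rr. apply adj_cmp.
  - apply adj_tens; [apply adj_id | split; [apply adj_copy_unit | apply adj_copy_counit]].
  - apply adj_iso; [apply asc_iso2 | apply asc_iso1].
Qed.

Lemma run_inv_nat {X Y : ob C} (f : hom C X Y) : run_inv X >> (f ⊗ idm I) = f >> run_inv Y.
Proof.
  apply (@iso_cancel_r _ _ _ (run Y) (run_inv Y)); [apply run_iso1|].
  nrm. rw (run_nat f). rw (run_iso2 X). rw (run_iso2 Y). rewrite cmp_idl, cmp_idr. reflexivity.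
Qed.

Definition cap (Y : ob C) : hom C (tens Y Y) I := cocopy Y >> disc Y.
Definition cup (Y : ob C) : hom C I (tens Y Y) := codisc Y >> copy Y.
Definition Phi {X Y : ob C} (c : hom C X Y) : hom C (tens X Y) I := (c ⊗ idm Y) >> cap Y.
Definition Psi {X Y : ob C} (d : hom C (tens X Y) I) : hom C X Y :=
  run_inv X >> (idm X ⊗ cup Y) >> asc_inv X Y Y >> (d ⊗ idm Y) >> lun Y.

Lemma snake1 {Y : ob C} : run_inv Y >> (idm Y ⊗ cup Y) >> asc_inv Y Y Y >> (cap Y ⊗ idm Y) >> lun Y = idm Y.
Proof.
  unfold cup, cap. rewrite tcr, tcl. nrm.
  rw (eq_sym (frobenius_l Y)). rw (cocopy_unitr Y). rewrite cmp_idl. rw (copy_unitl Y). reflexivity.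
Qed.
Lemma snake2 {Y : ob C} : lun_inv Y >> (cup Y ⊗ idm Y) >> asc Y Y Y >> (idm Y ⊗ cap Y) >> run Y = idm Y.
Proof.
  unfold cup, cap. rewrite tcr, tcl. nrm.
  rw (eq_sym (frobenius_r Y)). rw (cocopy_unitl Y). rewrite cmp_idl. rw (copy_unitr Y). reflexivity.
Qed.

Lemma PsiPhi {X Y : ob C} (c : hom C X Y) : Psi (Phi c) = c.
Proof.
  unfold Psi, Phi. rewrite tcl. nrm.
  rwb (asc_inv_nat c (idm Y) (idm Y)). rewrite tensm_id.
  rwb (tswap c (cup Y)). rw (run_inv_nat c).
  rw (@snake1 Y). apply cmp_idr.
Qed.

Lemma P' {X Y Z W : ob C} : (asc_inv X Y Z ⊗ idm W) >> asc (tens X Y) Z W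
  = asc X (tens Y Z) W >> (idm X ⊗ asc Y Z W) >> asc_inv X Y (tens Z W).
Proof.
  transitivity ((asc_inv X Y Z ⊗ idm W) >> asc (tens X Y) Z W >> asc X Y (tens Z W) >> asc_inv X Y (tens Z W)).
  - rw (asc_iso1 X Y (tens Z W)). rewrite cmp_idr. reflexivity.
  - rw (eq_sym (pentagon X Y Z W)). rw (eq_sym (tcl (W:=W) (asc_inv X Y Z) (asc X Y Z))).
    rewrite asc_iso2, tensm_id, cmp_idl. reflexivity.
Qed.

Lemma S_id {X Y : ob C} :
  (run_inv X ⊗ idm Y) >> ((idm X ⊗ cup Y) ⊗ idm Y) >> (asc_inv X Y Y ⊗ idm Y) >> asc (tens X Y) Y Y
  >> (idm (tens X Y) ⊗ cap Y) >> run (tens X Y) = idm (tens X Y).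
Proof.
  rw (@P' X Y Y Y). rewrite <- (tensm_id X Y) at 1.
  rwb (asc_inv_nat (idm X) (idm Y) (cap Y)). rw (@asc_inv_run X Y).
  rw (asc_nat (idm X) (cup Y) (idm Y)). rw (@triangle_inv X Y).
  rewrite <- !tcr. nrm. rewrite snake2, tensm_id. reflexivity.
Qed.

Lemma PhiPsi {X Y : ob C} (d : hom C (tens X Y) I) : Phi (Psi d) = d.
Proof.
  unfold Psi, Phi. rewrite !tcl. nrm.
  rewrite <- K2. nrm. rw (asc_nat d (idm Y) (idm Y)). rewrite tensm_id.
  rwb (lun_nat (cap Y)). rw (tswap d (cap Y)). rewrite K3. rw (run_nat d).
  rw (@S_id X Y). apply cmp_idl.
Qed.

Definition sh (X Y : ob C) : hom C (tens (tens X X) (tens Y Y)) (tens (tens X Y) (tens X Y)) :=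
  asc X X (tens Y Y) >> ((idm X ⊗ asc_inv X Y Y) >> ((idm X ⊗ (sym X Y ⊗ idm Y)) >>
  ((idm X ⊗ asc Y X Y) >> asc_inv X Y (tens X Y)))).

Lemma tslide {X X' A B A' B' : ob C} (f : hom C X X') (a : hom C A A') (b : hom C A' B')
  (b' : hom C A B) (a' : hom C B B') :
  a >> b = b' >> a' -> (f ⊗ a) >> (idm X' ⊗ b) = (idm X ⊗ b') >> (f ⊗ a').
Proof. intro H. rewrite <- !tensm_cmp, cmp_idr, cmp_idl, H. reflexivity. Qed.

Lemma sh_nat {X Y X' Y' : ob C} (f : hom C X X') (g : hom C Y Y') :
  ((f ⊗ f) ⊗ (g ⊗ g)) >> sh X' Y' = sh X Y >> ((f ⊗ g) ⊗ (f ⊗ g)).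
Proof.
  unfold sh. nrm.
  rw (asc_nat f f (g ⊗ g)).
  rw (tslide f _ _ _ _ (asc_inv_nat f g g)).
  assert (E : ((f ⊗ g) ⊗ g) >> (sym X' Y' ⊗ idm Y') = (sym X Y ⊗ idm Y) >> ((g ⊗ f) ⊗ g)).
  { rewrite <- !tensm_cmp, sym_nat, cmp_idl, cmp_idr. reflexivity. }
  rw (tslide f _ _ _ _ E).
  rw (tslide f _ _ _ _ (asc_nat g f g)).
  rw (asc_inv_nat f g (f ⊗ g)). reflexivity.
Qed.

Lemma copy_tens' (X Y : ob C) : copy (tens X Y) = (copy X ⊗ copy Y) >> sh X Y.
Proof. rewrite copy_tens. reflexivity. Qed.

Lemma map_id {X : ob C} : is_map (idm X).
Proof. exact (adj_map adj_id). Qed.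

Lemma map_tens {X Y X' Y' : ob C} (f : hom C X X') (g : hom C Y Y') :
  is_map f -> is_map g -> is_map (f ⊗ g).
Proof.
  intros Hf Hg. split.
  - rewrite (copy_tens' X Y), (copy_tens' X' Y'). nrm. rw (eq_sym (sh_nat f g)).
    apply le_post. apply le_eq. rewrite <- tensm_cmp, <- (map_copy Hf), <- (map_copy Hg), tensm_cmp. reflexivity.
  - apply le_eq. rewrite !disc_tens. nrm. rewrite <- tensm_cmp, (map_disc Hf), (map_disc Hg). reflexivity.
Qed.

Lemma Rdisc {X Y : ob C} : @Rr X Y >> disc (tens X Y) = (proj2 X Y ⊗ idm Y) >> cap Y.
Proof.
  unfold Rr, proj2, cap. rewrite disc_tens. nrm.
  rw (eq_sym (tensm_cmp (idm X) (disc X) (cocopy Y) (disc Y))). rewrite cmp_idl.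
  rewrite (tsplit (disc X) (cocopy Y >> disc Y)). nrm.
  rw (lun_nat (cocopy Y >> disc Y)). rewrite <- (tensm_id Y Y).
  rwb (asc_nat (disc X) (idm Y) (idm Y)). rw (@K2 Y Y).
  rewrite tcl. nrm. reflexivity.
Qed.

Lemma DP {X Y : ob C} : @Dl X Y >> proj1 (tens X Y) Y = idm (tens X Y).
Proof.
  unfold Dl, proj1. nrm. rewrite <- (tensm_id X Y).
  rwb (asc_inv_nat (idm X) (idm Y) (disc Y)). rw (@asc_inv_run X Y).
  rewrite <- !tcr. nrm. rewrite copy_unitr. reflexivity.
Qed.

Lemma M_top {X : ob C} (x : hom C X I) : M x (disc X) = x.
Proof. apply le_antisym; [apply M_le_l | apply M_glb; [apply le_refl | apply le_disc]]. Qed.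

Lemma fwd : peircean C -> boolean_hyperdoctrine C.
Proof.
  intros [B HB].
  assert (meetM : forall X (a b : hom C X I), ba_meet (B X I) a b = M a b).
  { intros. apply (bl_antisym (B X I)).
    - apply M_glb; [apply (meet_lb1 (B X I)) | apply (meet_lb2 (B X I))].
    - apply (meet_glb (B X I)); [apply M_le_l | apply M_le_r]. }
  assert (topD : forall X, ba_top (B X I) = disc X).
  { intros. apply (bl_antisym (B X I)); [apply le_disc | apply (top_ub (B X I))]. }
  assert (Hhom : forall X Y (f : hom C X Y), is_map f -> ba_hom (B Y I) (B X I) (fun c => f >> c)).
  { intros X Y f Hf. unfold ba_hom.
    assert (hm : forall a b, f >> ba_meet (B Y I) a b = ba_meet (B X I) (f >> a) (f >> b)).
    { intros. rewrite !meetM. apply map_M, Hf. }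
    repeat split.
    - exact hm.
    - intros a b. rewrite (join_demorgan (B Y I)), (join_demorgan (B X I)).
      rewrite (HB _ _ _ _ _ Hf), hm, (HB _ _ _ _ _ Hf), (HB _ _ _ _ _ Hf). reflexivity.
    - rewrite !topD. apply map_disc, Hf.
    - rewrite <- (neg_top (B Y I)), <- (neg_top (B X I)), (HB _ _ _ _ _ Hf), !topD, (map_disc Hf).
      reflexivity.
    - intros a. apply HB, Hf. }
  assert (frobM : forall A A' (f : hom C A A') (g : hom C A' A) (b : hom C A' I) (a : hom C A I),
             adj f g -> g >> M (f >> b) a = M b (g >> a)).
  { intros A A' f g b a Hfg. rewrite <- !meetM.
    destruct (Hhom _ _ f (adj_map Hfg)) as (_ & Hj & _ & _ & Hn).
    apply (frob_gen (B A I) (B A' I) (fun c => f >> c) (fun c => g >> c)).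
    - exact Hj.
    - exact Hn.
    - intros; apply pred_adj, Hfg. }
  exists (fun X => @M X), (fun X => disc X). split; [| split; [| split]].
  - split; [| split].
    + intros X a b. split; [apply M_le_l | split; [apply M_le_r | intros d; apply M_glb]].
    + intros. apply le_disc.
    + intros X Y f Hf. split; [intros; apply map_M, Hf | apply map_disc, Hf].
  - exists cap. intros X Y a b.
    assert (E : M (proj1 (tens X Y) Y >> a) ((proj2 X Y ⊗ idm Y) >> cap Y) = Rr >> a).
    { rewrite <- Rdisc. rewrite <- (frobM _ _ Dl Rr _ _ adj_D).
      rewrite cmpA, DP, cmp_idl, M_top. reflexivity. }
    rewrite E. change (cmp (cmp (tensm (idm X) (copy Y)) (asc_inv X Y Y)) b) with (Dl >> b).
    apply pred_adj, adj_D.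
  - exists (fun X Y a => exq >> a). split; [| split].
    + intros. apply pred_adj, adj_proj1.
    + intros X X' Y f a Hf. unfold exq. nrm. rwb (tswap f (codisc Y)). rw (run_inv_nat f). reflexivity.
    + intros X Y a b. apply frobM, adj_proj1.
  - exists (fun X => B X I). exact Hhom.
Qed.

Lemma Phi_nat {X Y Z : ob C} (f : hom C X Y) (c : hom C Y Z) : Phi (f >> c) = (f ⊗ idm Z) >> Phi c.
Proof. unfold Phi. rewrite tcl. nrm. reflexivity. Qed.

Lemma Psi_nat {X Y Z : ob C} (f : hom C X Y) (d : hom C (tens Y Z) I) : f >> Psi d = Psi ((f ⊗ idm Z) >> d).
Proof. rewrite <- (PsiPhi (f >> Psi d)), Phi_nat, PhiPsi. reflexivity. Qed.

Lemma ordiso {X Y : ob C} (c c' : hom C X Y) : le c c' <-> le (Phi c) (Phi c').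
Proof.
  split; intro H.
  - unfold Phi. apply le_post, tensm_mono; [exact H | apply le_refl].
  - rewrite <- (PsiPhi c), <- (PsiPhi c'). unfold Psi.
    apply le_post, le_pre, tensm_mono; [exact H | apply le_refl].
Qed.

Lemma bwd : boolean_hyperdoctrine C -> peircean C.
Proof.
  intros (mt & tp & _ & _ & _ & B & Hh).
  exists (fun X Y => transport (@le C X Y) (B (tens X Y)) (@Phi X Y) (@Psi X Y) PsiPhi PhiPsi ordiso).
  intros X Y Z f c Hf.
  change (f >> Psi (ba_neg (B (tens Y Z)) (Phi c)) = Psi (ba_neg (B (tens X Z)) (Phi (f >> c)))).
  destruct (Hh _ _ _ (map_tens Hf (@map_id Z))) as (_ & _ & _ & _ & Hn).
  rewrite Phi_nat, <- Hn. apply Psi_nat.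
Qed.

End Basics.

Theorem corollary28 (C : CartBicat) : peircean C <-> boolean_hyperdoctrine C.
Proof. split; [apply fwd | apply bwd]. Qed.
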